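(* Let $(S,\mathcal{E})$ be a qualitative evidence frame and let $\mathfrak{F}$ be a set of evidence allocation functions on $(S,\mathcal{E})$. Define $u:2^{\mathcal{E}}\to\tau_{\mathcal{E}}$ by $u(\mathbf{E})=\bigcup\mathbf{E}$ if $\mathbf{E}\neq\emptyset$ and $u(\emptyset)=S$. Then $\mathfrak{F}\cup\{u\}$ is a set of evidence allocation functions on $(S,\mathcal{E})$.
   Context: A qualitative evidence frame is a pair $(S,\mathcal{E})$ where $S$ is a finite nonempty set (of possible states) and $\mathcal{E}$ is a nonempty family of subsets of $S$ with $\emptyset\notin\mathcal{E}$ and $S\notin\mathcal{E}$. For any family $\mathbf{E}\subseteq 2^S$, $\tau_{\mathbf{E}}$ denotes the topology on $S$ generated by $\mathbf{E}$ (as a subbasis): it consists of $\emptyset$, $S$, all finite intersections of members of $\mathbf{E}$, and all arbitrary unions of such finite intersections. For $\mathbf{E}\subseteq\mathcal{E}$, an element $D\in\tau_{\mathbf{E}}$ is called dense in $\bigcup\mathbf{E}$ w.r.t. $\tau_{\mathbf{E}}$ if $D\cap T\neq\emptyset$ for every nonempty $T\in\tau_{\mathbf{E}}$. A set of evidence allocation functions on $(S,\mathcal{E})$ is a set $\mathfrak{F}$ of functions $2^{\mathcal{E}}\to\tau_{\mathcal{E}}$ such that for all $f,g\in\mathfrak{F}$: (1) $f(\emptyset)=S$; (2) for every nonempty $\mathbf{E}\subseteq\mathcal{E}$, either $f(\mathbf{E})=\emptyset$, or $f(\mathbf{E})\in\tau_{\mathbf{E}}$ and $f(\mathbf{E})$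 is dense in $\bigcup\mathbf{E}$ w.r.t. $\tau_{\mathbf{E}}$; (3) for every $\mathbf{E}\subseteq\mathcal{E}$, $f(\mathbf{E})\subseteq g(\mathbf{E})$ or $g(\mathbf{E})\subseteq f(\mathbf{E})$. *)

(* Defs.v *)
From mathcomp Require Import all_boot.
Set Implicit Arguments. Unset Strict Implicit. Unset Printing Implicit Defensive.

Definition qual_evidence_frame (S : finType) (E : {set {set S}}) : Prop :=
  (0 < #|S|)%N /\ E != set0 /\ set0 \notin E /\ [set: S] \notin E.

(* U is open iff U is
   empty, U is S, or U is a union of finite intersections of members of Es.
   (S finite: arbitrary unions are finite unions, indexed by a set F of
   finite subfamilies G of Es, each contributing \bigcap_(A in G) A.) *)
Definition tau (S : finType) (Es : {set {set S}}) (U : {set S}) : Prop :=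
  U = set0 \/ U = [set: S] \/
  exists F : {set {set {set S}}},
    (forall G : {set {set S}}, G \in F -> G != set0 /\ G \subset Es) /\
    U = \bigcup_(G in F) \bigcap_(A in G) A.

Definition dense_in (S : finType) (Es : {set {set S}}) (D : {set S}) : Prop :=
  tau Es D /\ forall T : {set S}, tau Es T -> T != set0 -> D :&: T != set0.

(* A set of evidence allocation functions on (S, E): a set Fs of functions
   2^E -> tau_E (represented as functions {set {set S}} -> {set S}, only
   their values on subfamilies of E are relevant). *)
Definition EAF_set (S : finType) (E : {set {set S}})
  (Fs : ({set {set S}} -> {set S}) -> Prop) : Prop :=
  forall f g, Fs f -> Fs g ->
    (forall Es : {set {set S}}, Es \subset E -> tau E (f Es)) /\
    f set0 = [set: S] /\
    (forall Es : {set {set S}}, Es \subset E -> Es != set0 ->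
        f Es = set0 \/ (tau Es (f Es) /\ dense_in Es (f Es))) /\
    (forall Es : {set {set S}}, Es \subset E -> f Es \subset g Es \/ g Es \subset f Es).

Definition u_fun (S : finType) (Es : {set {set S}}) : {set S} :=
  if Es == set0 then [set: S] else \bigcup_(A in Es) A.

(* Main.v *)
Require Import Defs.
From mathcomp Require Import all_boot.

Lemma tau_sub (S : finType) (Es : {set {set S}}) (U : {set S}) :
  tau Es U -> U = [set: S] \/ U \subset \bigcup_(A in Es) A.
Proof.
case=> [->|[->|[F [HF ->]]]]; [right; exact: sub0set| by left|right].
apply/subsetP => x /bigcupP [G HG /bigcapP Hx].
have [Gn GE] := HF G HG.
move: (set_0Vmem G) => [G0|[A HA]]; first by rewrite G0 eqxx in Gn.
apply/bigcupP; exists A; [exact: (subsetP GE) | exact: Hx].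
Qed.

Lemma tau_u (S : finType) (E Es : {set {set S}}) : Es \subset E ->
  tau E (\bigcup_(A in Es) A).
Proof.
move=> sub.
right; right; exists [set [set A] | A in Es]; split.
  move=> G /imsetP [A HA ->]; split; first by apply/set0Pn; exists A; rewrite in_set1.
  by rewrite sub1set; exact: (subsetP sub).
apply/setP => x; apply/bigcupP/bigcupP => [[A HA Hx]|[G /imsetP [A HA ->] /bigcapP Hx]].
  exists [set A]; first exact: imset_f.
  by apply/bigcapP => B; rewrite in_set1 => /eqP ->.
by exists A => //; apply: Hx; rewrite in_set1.
Qed.

Lemma tau_uf (S : finType) (E Es : {set {set S}}) : Es \subset E -> tau E (u_fun Es).
Proof. move=> sub; rewrite /u_fun; case: ifP => _; [by right; left | exact: tau_u]. Qed.

Lemma dense_u (S : finType) (E Es : {set {set S}}) :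
  set0 \notin E -> Es \subset E -> Es != set0 -> dense_in Es (u_fun Es).
Proof.
move=> h0 sub ne; rewrite /u_fun (negbTE ne); split; first exact: tau_u (subxx _).
move=> T [->|[->|[F [HF ->]]]]; first by rewrite eqxx.
  move=> _; rewrite setIT; move/set0Pn: ne => [A HA].
  have: A != set0 by apply: contraNneq h0 => <-; exact: (subsetP sub).
  case/set0Pn => x Hx; apply/set0Pn; exists x; apply/bigcupP; by exists A.
case/set0Pn => x /bigcupP [G HG /bigcapP Hx].
have [Gn GE] := HF G HG.
move: (set_0Vmem G) => [G0|[A HA]]; first by rewrite G0 eqxx in Gn.
apply/set0Pn; exists x; rewrite inE; apply/andP; split.
  apply/bigcupP; exists A; [exact: (subsetP GE) | exact: Hx].
by apply/bigcupP; exists G => //; apply/bigcapP.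
Qed.

Lemma cmp_u (S : finType) (E : {set {set S}}) Fs f (Es : {set {set S}}) :
  EAF_set E Fs -> Fs f -> Es \subset E ->
  f Es \subset u_fun Es \/ u_fun Es \subset f Es.
Proof.
move=> H Hf sub; have [_ [f0 [f2 _]]] := H f f Hf Hf.
case: (eqVneq Es set0) => [->|ne].
  by left; rewrite f0 /u_fun eqxx.
case: (f2 Es sub ne) => [->|[t _]]; first by left; exact: sub0set.
case: (tau_sub _ _ _ t) => [->|s]; first by right; exact: subsetT.
by left; rewrite /u_fun (negbTE ne).
Qed.

Theorem proposition2 (S : finType) (E : {set {set S}})
  (Fs : ({set {set S}} -> {set S}) -> Prop) :
  qual_evidence_frame E -> EAF_set E Fs ->
  EAF_set E (fun h => Fs h \/ h = @u_fun S).
Proof.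
move=> [_ [_ [h0 _]]] H f g Hf Hg.
have uprops : (forall Es : {set {set S}}, Es \subset E -> tau E (u_fun Es)) /\
    u_fun set0 = [set: S] /\
    (forall Es : {set {set S}}, Es \subset E -> Es != set0 ->
        u_fun Es = set0 \/ (tau Es (u_fun Es) /\ dense_in Es (u_fun Es))).
  split; first by move=> Es sub; exact: tau_uf sub.
  split; first by rewrite /u_fun eqxx.
  move=> Es sub ne; right; split; first exact: tau_uf (subxx _).
  exact: dense_u h0 sub ne.
case: Hf => [Hf|->]; case: Hg => [Hg|->].
- exact: H.
- have [a [b [c _]]] := H f f Hf Hf; do 3!(split => //).
  by move=> Es sub; exact: cmp_u H Hf sub.
- have [a [b c]] := uprops; do 3!(split => //).
  by move=> Es sub; case: (cmp_u _ _ _ _ _ H Hg sub); [right|left].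
- have [a [b c]] := uprops; do 3!(split => //).
  by move=> Es _; left.
Qed.
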